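(* Assume $\mu<0$ and conditions (C1) and (C2). Then for every $T\ge1$, $$\mu^*_T:=\mathbb E^*_{\pi^*}(f(X_1,Y_{1+T}))<\mu^*:=\pi^*(f).$$
   Context: Let $E$ be a finite set and $P,Q$ irreducible aperiodic stochastic $E\times E$ matrices with invariant probability vectors $\pi_P,\pi_Q$; $\pi=\pi_P\otimes\pi_Q$. Let $f:E\times E\to\mathbb Z$ with gcd of its values equal to $1$; $\nu(f)=\sum f\,d\nu$; $\mu=\pi(f)$. A cycle w.r.t. $P$ is a sequence $x_1,\dots,x_n$ with $P(x_k,x_{k+1})>0$ for all $k$, indices mod $n$. (C1): for some $n\ge1$ there are cycles $x_1,\dots,x_n$ w.r.t. $P$ and $y_1,\dots,y_n$ w.r.t. $Q$ with $\sum_kf(x_k,y_k)>0$. (C2): for every $T\ge1$ there are $n\ge1$ and cycles $x_1,\dots,x_n$ w.r.t. $P$ and $y_1,\dots,y_n$ w.r.t. $Q$ with $\sum_kf(x_k,y_k)\ne\sum_kf(x_k,y_{k+T\bmod n})$. Let $\Phi(\theta)_{(x,y),(x',y')}=e^{\theta f(x',y')}P_{x,x'}Q_{y,y'}$, $\varphi(\theta)$ its spectral radius, $\theta^*>0$ the unique positive solution of $\varphi(\theta)=1$, $r^*$ a positive right eigenvector of $\Phi(\theta^* )$ for eigenvalue 1, $R^*_{(x,y),(x',y')}=\frac{r^*(x',y')}{r^*(x,y)}\Phi(\theta^* )_{(x,y),(x',y')}$, and $\pi^*$ the invariant probability vector of $R^*$. $\mathbb P^*_{\pi^*}$ (expectation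 $\mathbb E^*_{\pi^*}$) is the law under which $(X_n,Y_n)_{n\ge0}$ is a stationary Markov chain on $E^2$ with transition matrix $R^*$. *)

(* Defs.v *)
From HB Require Import structures.
From mathcomp Require Import all_boot all_order all_algebra.
From mathcomp Require Import complex.
From mathcomp Require Import boolp classical_sets reals ereal topology normedtype sequences exp.
Set Implicit Arguments. Unset Strict Implicit. Unset Printing Implicit Defensive.
Import Order.TTheory GRing.Theory Num.Theory.
Import numFieldNormedType.Exports.
Local Open Scope ring_scope.

Section Defs.
Variable R : realType.

Fixpoint mpow (T : finType) (M : T -> T -> R) (n : nat) : T -> T -> R :=
  match n with
  | O => fun x y => if x == y then 1 else 0
  | S m => fun x y => \sum_(w : T) mpow M m x w * M w y
  end.

Definition stochastic (T : finType) (M : T -> T -> R) : Prop :=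
  (forall x y, 0 <= M x y) /\ (forall x, \sum_(y : T) M x y = 1).

Definition irreducible (T : finType) (M : T -> T -> R) : Prop :=
  forall x y, exists n : nat, 0 < mpow M n x y.

(* period of every state is 1: gcd { n >= 1 : M^n(x,x) > 0 } = 1 *)
Definition aperiodic (T : finType) (M : T -> T -> R) : Prop :=
  forall x : T, forall d : nat,
    (forall n : nat, (0 < n)%N -> 0 < mpow M n x x -> (d %| n)%N) -> d = 1%N.

Definition prob_vector (T : finType) (v : T -> R) : Prop :=
  (forall x, 0 <= v x) /\ \sum_(x : T) v x = 1.

Definition invariant_prob (T : finType) (M : T -> T -> R) (v : T -> R) : Prop :=
  prob_vector v /\ forall y, \sum_(x : T) v x * M x y = v y.

Definition gcd_values_one (E : finType) (f : E -> E -> int) : Prop :=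
  forall d : nat, (forall x y, (d %| `|f x y|)%N) -> d = 1%N.

Definition is_cycle (E : finType) (P : E -> E -> R) (n : nat) (x : nat -> E) : Prop :=
  forall k : nat, (k < n)%N -> 0 < P (x k) (x ((k.+1) %% n)%N).

Definition condC1 (E : finType) (P Q : E -> E -> R) (f : E -> E -> int) : Prop :=
  exists n : nat, exists x y : nat -> E,
    [/\ (1 <= n)%N, is_cycle P n x, is_cycle Q n y &
        (0 < \sum_(k < n) f (x k) (y k))%R].

Definition condC2 (E : finType) (P Q : E -> E -> R) (f : E -> E -> int) : Prop :=
  forall T : nat, (1 <= T)%N ->
  exists n : nat, exists x y : nat -> E,
    [/\ (1 <= n)%N, is_cycle P n x, is_cycle Q n y &
        \sum_(k < n) f (x k) (y k) != \sum_(k < n) f (x k) (y ((k + T) %% n)%N)].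

Definition Phi (E : finType) (P Q : E -> E -> R) (f : E -> E -> int) (theta : R)
  : (E * E)%type -> (E * E)%type -> R :=
  fun z z' => expR (theta * (f z'.1 z'.2)%:~R) * P z.1 z'.1 * Q z.2 z'.2.

Definition mx_of (T : finType) (M : T -> T -> R) : 'M[R]_#|T| :=
  \matrix_(i, j) M (enum_val i) (enum_val j).

Definition modulus (z : R[i]) : R := Num.sqrt (complex.Re z ^+ 2 + complex.Im z ^+ 2).

Definition spectral_radius (T : finType) (M : T -> T -> R) : R :=
  sup [set modulus z | z in [set z : R[i] |
        root (char_poly (map_mx (real_complex R) (mx_of M))) z]].

Definition expect (T : finType) (v : T -> R) (g : T -> int) : R :=
  \sum_(z : T) v z * (g z)%:~R.

Definition Rstar (T : finType) (Phi : T -> T -> R) (r : T -> R) : T -> T -> R :=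
  fun z z' => r z' / r z * Phi z z'.

(* E_pi (g(X_1, Y_{1+T})) for a Markov chain (X_n,Y_n) with transition matrix M
   started from X_0 ~ pi :  sum over z0, z1, z' of
   pi(z0) M(z0,z1) M^T(z1,z') g(z1.1, z'.2) *)
Definition lagged_expect (E : finType) (M : (E * E)%type -> (E * E)%type -> R)
  (v : (E * E)%type -> R) (g : E -> E -> int) (T : nat) : R :=
  \sum_(z0 : E * E) \sum_(z1 : E * E) \sum_(z' : E * E)
     v z0 * M z0 z1 * mpow M T z1 z' * (g z1.1 z'.2)%:~R.

End Defs.

(* Main.v *)
Require Import Defs.
From HB Require Import structures.
From mathcomp Require Import all_boot all_order all_algebra.
From mathcomp Require Import complex.
From mathcomp Require Import boolp classical_sets reals ereal topology normedtype sequences exp.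
From mathcomp Require Import ring lra zify.
Import Order.TTheory GRing.Theory Num.Theory.
Set Implicit Arguments. Unset Strict Implicit. Unset Printing Implicit Defensive.

Section Residues.
Variable A : nat -> Prop.
Variable n : nat.
Hypothesis Hn : 0 < n.
Hypothesis A0 : A 0.
Hypothesis AD : forall s t, A s -> A t -> A (s + t).
Hypothesis Aper : forall d, (forall t, 0 < t -> A t -> d %| t) -> d = 1.

Lemma AM k t : A t -> A (k * t).
Proof. move=> At; elim: k => [|k IH]; first by rewrite mul0n. by rewrite mulSn; apply: AD. Qed.

Definition res i := exists t, A t /\ t %% n = i.

Lemma residues c : exists t, A t /\ t %% n = c %% n.
Proof.
case: (pselect (exists i, 0 < i /\ res i)) => [Hex|Hno]; last first.
  have Hn1 : n = 1.
    apply: Aper => t _ At; rewrite /dvdn; apply/eqP.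
    case: (posnP (t %% n)) => // Hp; exfalso; apply: Hno.
    by exists (t %% n); split => //; exists t.
  by exists 0; split => //; rewrite Hn1 !modn1.
have Hp : exists i, (0 < i) && `[< res i >].
  by case: Hex => i [Hi Hr]; exists i; rewrite Hi; apply/asboolP.
case: (ex_minnP Hp) => d /andP[Hd /asboolP [ts [Ats Htsd]]] Hmin.
have Hdn : d < n by rewrite -Htsd ltn_pmod.
have Hred : forall u rho q, A u -> rho < d -> (u %% n + q * d) %% n = (rho + q * d) %% n ->
   rho = 0.
  move=> u rho q Au Hrho Heq.
  have Hrn : rho < n by apply: ltn_trans Hdn.
  have Hu : u %% n = rho.
    rewrite modnDml in Heq.
    apply/eqP; rewrite -[X in _ == X](modn_small Hrn) -(eqn_modDr (q * d)) Heq.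
    by [].
  case: (posnP rho) => // Hr0.
  have : d <= rho by apply: Hmin; rewrite Hr0 /=; apply/asboolP; exists u.
  by rewrite leqNgt Hrho.
have Hmul : forall s q, A s -> ((s + q * ((n - 1) * ts)) %% n + q * d) %% n = s %% n.
  move=> s q As.
  rewrite -Htsd -modnDmr modnMmr modnDmr modnDml -addnA -mulnDr.
  have -> : (n - 1) * ts + ts = ts * n by rewrite -{2}(mul1n ts) -mulnDl subnK // mulnC.
  by rewrite mulnA addnC modnMDl.
have Hdt : forall t, A t -> d %| t %% n.
  move=> t At.
  set i := t %% n.
  have Hi : i = i %/ d * d + i %% d := divn_eq i d.
  have := Hred (t + (i %/ d) * ((n - 1) * ts)) (i %% d) (i %/ d).
  move=> /(_ (AD At (AM _ (AM _ Ats)))) /(_ (ltn_pmod _ Hd)).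
  rewrite Hmul // -/i addnC -Hi modn_mod => /(_ erefl) H0.
  by rewrite /dvdn H0.
have Hdn' : d %| n.
  set q := n %/ d.
  have Hq : n = q * d + n %% d := divn_eq n d.
  have := Hred ((q * ((n - 1) * ts))) (n %% d) q.
  move=> /(_ (AM _ (AM _ Ats))) /(_ (ltn_pmod _ Hd)).
  have := Hmul 0 q A0; rewrite add0n mod0n => ->.
  rewrite addnC -Hq modnn => /(_ erefl) H0.
  by rewrite /dvdn H0.
have Hd1 : d = 1.
  apply: Aper => t _ At.
  by rewrite (divn_eq t n) dvdn_add ?dvdn_mull // Hdt.
exists (c * ts); split; first exact: AM.
by rewrite -modnMmr Htsd Hd1 muln1.
Qed.

End Residues.

Local Open Scope ring_scope.

Section Mpow.
Variable R : realType.
Variable ST : finType.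
Implicit Types M : ST -> ST -> R.

Lemma mpow0 M x y : mpow M 0 x y = if x == y then 1 else 0.
Proof. by []. Qed.

Lemma mpowS M n x y : mpow M n.+1 x y = \sum_w mpow M n x w * M w y.
Proof. by []. Qed.

Lemma sum_delta (F : ST -> R) x : \sum_y (if x == y then 1 else 0) * F y = F x.
Proof.
rewrite (bigD1 x) //= eqxx mul1r big1 ?addr0 // => y /negbTE.
by rewrite eq_sym => ->; rewrite mul0r.
Qed.

Lemma sum_delta_r (F : ST -> R) y : \sum_x F x * (if x == y then 1 else 0) = F y.
Proof.
rewrite (bigD1 y) //= eqxx mulr1 big1 ?addr0 // => x /negbTE ->; by rewrite mulr0.
Qed.

Lemma mpow_add M a b x z :
  mpow M (a + b)%N x z = \sum_y mpow M a x y * mpow M b y z.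
Proof.
elim: b z => [|b IH] z.
  by rewrite addn0 /= sum_delta_r.
rewrite addnS mpowS.
under eq_bigr do rewrite IH big_distrl /=.
rewrite exchange_big /=; apply: eq_bigr => y _.
by rewrite big_distrr /=; apply: eq_bigr => w _; rewrite mulrA.
Qed.

Lemma mpow1 M x y : mpow M 1 x y = M x y.
Proof. by rewrite mpowS /= sum_delta. Qed.

Lemma mpowSl M n x y : mpow M n.+1 x y = \sum_w M x w * mpow M n w y.
Proof.
rewrite -add1n mpow_add; apply: eq_bigr => w _; by rewrite mpow1.
Qed.

Lemma mpow_ge0 M n x y : (forall a b, 0 <= M a b) -> 0 <= mpow M n x y.
Proof.
move=> H; elim: n x y => [|n IH] x y /=; first by case: eqP.
by apply: sumr_ge0 => w _; rewrite mulr_ge0.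
Qed.

Lemma sum_pos_term (F : ST -> R) : (forall i, 0 <= F i) -> 0 < \sum_i F i ->
  exists i, 0 < F i.
Proof.
move=> H Hs; case: (pselect (exists i, 0 < F i)) => // Hn; exfalso.
have : \sum_i F i <= 0.
  apply: sumr_le0 => i _; rewrite leNgt; apply/negP => Hi; apply: Hn; by exists i.
by rewrite leNgt Hs.
Qed.

Lemma mul_pos_factors (x y : R) : 0 <= x -> 0 <= y -> 0 < x * y -> 0 < x /\ 0 < y.
Proof.
move=> hx hy hxy; split; rewrite lt0r ?hx ?hy andbT; apply/eqP => H;
  by move: hxy; rewrite H ?mul0r ?mulr0 ltxx.
Qed.

Lemma sum_ge_term_A (F : ST -> R) i0 :
  (forall i, 0 <= F i) -> F i0 <= \sum_i F i.
Proof.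
move=> H; rewrite (bigD1 i0) //= lerDl; by apply: sumr_ge0.
Qed.

Lemma mpow_mul_pos M a b x y z : (forall u v, 0 <= M u v) ->
  0 < mpow M a x y -> 0 < mpow M b y z -> 0 < mpow M (a + b)%N x z.
Proof.
move=> H0 h1 h2; rewrite mpow_add.
apply: (@lt_le_trans _ _ (mpow M a x y * mpow M b y z)); first by rewrite mulr_gt0.
apply: (@sum_ge_term_A (fun w => mpow M a x w * mpow M b w z)) => w.
by rewrite mulr_ge0 // mpow_ge0.
Qed.

Lemma mpow_path M (Z : nat -> ST) j : (forall u v, 0 <= M u v) ->
  (forall i, 0 < M (Z i) (Z i.+1)) -> 0 < mpow M j (Z 0%N) (Z j).
Proof.
move=> H0 H; elim: j => [|j IH]; first by rewrite /= eqxx ltr01.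
rewrite -[j.+1]addn1; apply: (mpow_mul_pos H0 IH); rewrite mpow1 addn1; exact: H.
Qed.

End Mpow.

Section Wsum.
Variable R : realType.
Variable E : finType.

Fixpoint wsum (n : nat) (F : seq E -> R) : R :=
  match n with
  | O => F [::]
  | n'.+1 => \sum_(y : E) wsum n' (fun s => F (y :: s))
  end.

Lemma wsum_ext n F G : (forall s, F s = G s) -> wsum n F = wsum n G.
Proof. by move=> H; have -> : F = G by apply: funext. Qed.

Lemma wsumD n F G : wsum n (fun s => F s + G s) = wsum n F + wsum n G.
Proof.
elim: n F G => [|n IH] F G //=.
by rewrite -big_split /=; apply: eq_bigr => y _; rewrite IH.
Qed.

Lemma wsumZ n k F : wsum n (fun s => k * F s) = k * wsum n F.
Proof.
elim: n F => [|n IH] F //=.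
by rewrite big_distrr /=; apply: eq_bigr => y _; rewrite IH.
Qed.

Lemma wsumN n F : wsum n (fun s => - F s) = - wsum n F.
Proof.
rewrite -mulN1r -wsumZ; apply: wsum_ext => s; by rewrite mulN1r.
Qed.

Lemma wsum_sum n (I : finType) (F : I -> seq E -> R) :
  wsum n (fun s => \sum_i F i s) = \sum_i wsum n (F i).
Proof.
elim: n F => [|n IH] F //=.
rewrite exchange_big /=; apply: eq_bigr => y _; by rewrite IH.
Qed.

Lemma wsum_le n F G : (forall s, F s <= G s) -> wsum n F <= wsum n G.
Proof.
elim: n F G => [|n IH] F G H //=.
by apply: ler_sum => y _; apply: IH.
Qed.

Lemma sum_lt_point (I : finType) (F G : I -> R) i0 :
  (forall i, F i <= G i) -> F i0 < G i0 -> \sum_i F i < \sum_i G i.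
Proof.
move=> H H0; rewrite (bigD1 i0) //= [X in _ < X](bigD1 i0) //=.
by apply: ltr_leD => //; apply: ler_sum.
Qed.

Lemma wsum_lt n F G s0 : (forall s, F s <= G s) -> size s0 = n ->
  F s0 < G s0 -> wsum n F < wsum n G.
Proof.
elim: n F G s0 => [|n IH] F G s0 H /=.
  by move/size0nil => ->.
case: s0 => [//|y0 s0] [Hs] Hlt.
apply: (@sum_lt_point _ _ _ y0) => [y|]; first by apply: wsum_le.
by apply: (IH _ _ s0).
Qed.

Lemma wsum_rcons n F :
  wsum n (fun s => \sum_y F (rcons s y)) = wsum n.+1 F.
Proof.
elim: n F => [|n IH] F //=.
apply: eq_bigr => y0 _; exact: (IH (fun s => F (y0 :: s))).
Qed.

End Wsum.

Lemma sum_pair (R : realType) (E : finType) (F : (E * E)%type -> R) :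
  \sum_z F z = \sum_x \sum_y F (x, y).
Proof. by rewrite pair_bigA; apply: eq_bigr => -[]. Qed.

Lemma sum_ge_term (R : realType) (I : finType) (F : I -> R) i0 :
  (forall i, 0 <= F i) -> F i0 <= \sum_i F i.
Proof.
move=> H; rewrite (bigD1 i0) //= lerDl; by apply: sumr_ge0.
Qed.

Lemma sum4_swap (R : realType) (E : finType) (F : E -> E -> E -> E -> R) :
  \sum_a \sum_b \sum_c \sum_d F a b c d = \sum_c \sum_d \sum_a \sum_b F a b c d.
Proof.
under eq_bigr do rewrite exchange_big /=.
under eq_bigr do under eq_bigr do rewrite exchange_big /=.
rewrite exchange_big /=; apply: eq_bigr => c _; by rewrite exchange_big.
Qed.

Lemma lnMp (R : realType) (x y : R) : 0 < x -> 0 < y -> ln (x * y) = ln x + ln y.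
Proof. by move=> hx hy; rewrite lnM // posrE. Qed.

Lemma lnDp (R : realType) (x y : R) : 0 < x -> 0 < y -> ln (x / y) = ln x - ln y.
Proof. by move=> hx hy; rewrite ln_div // posrE. Qed.

Lemma key_ineq (R : realType) (c j n : R) : 0 <= c -> 0 < j -> 0 < n ->
  c * j * (ln n - ln j) <= c * (n - j).
Proof.
move=> hc hj hn; rewrite -mulrA; apply: ler_wpM2l => //.
rewrite -lnDp //.
have ht : 0 < n / j by rewrite divr_gt0.
have := expR_ge1Dx (ln (n / j)); rewrite lnK ?posrE // => H.
have : ln (n / j) <= n / j - 1 by rewrite lerBrDl.
move=> H2; have := ler_wpM2l (ltW hj) H2.
by rewrite mulrBr mulr1 [j * (n / j)]mulrC divfK ?gt_eqF.
Qed.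

Lemma key_strict (R : realType) (c j n : R) : 0 < c -> 0 < j -> 0 < n -> n != j ->
  c * j * (ln n - ln j) < c * (n - j).
Proof.
move=> hc hj hn hnj; rewrite -mulrA; rewrite ltr_pM2l //.
rewrite -lnDp //.
have ht : 0 < n / j by rewrite divr_gt0.
have hl : ln (n / j) != 0.
  apply/eqP => H; have H1 : n / j = 1 by rewrite -(lnK ht) H expR0.
  have : n == j by rewrite -[X in X == _](divfK (lt0r_neq0 hj)) H1 mul1r.
  by rewrite (negbTE hnj).
have := expR_gt1Dx hl; rewrite lnK ?posrE // => H.
have H2 : ln (n / j) < n / j - 1 by rewrite ltrBrDl.
have := ltr_pM2l hj; move=> /(_ (ln (n / j)) (n / j - 1)); rewrite H2 => /esym H3.
by move: H3; rewrite mulrBr mulr1 [j * (n / j)]mulrC divfK ?gt_eqF.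
Qed.

Section Main.
Variable R : realType.
Variable E : finType.
Variables (P Q : E -> E -> R) (f : E -> E -> int) (th : R).
Variables (r pi : (E * E)%type -> R).
Hypothesis HP0 : forall a b, 0 <= P a b.
Hypothesis HP1 : forall a, \sum_b P a b = 1.
Hypothesis HQ0 : forall a b, 0 <= Q a b.
Hypothesis Hr : forall z, 0 < r z.
Hypothesis Heig : forall z, \sum_(z' : E * E) Phi P Q f th z z' * r z' = r z.
Hypothesis Hpi : invariant_prob (Rstar (Phi P Q f th) r) pi.

Definition ef x y := expR (th * (f x y)%:~R).
Local Notation Ph := (Phi P Q f th).
Local Notation Rs := (Rstar (Phi P Q f th) r).

Lemma PhiE z z' : Ph z z' = ef z'.1 z'.2 * P z.1 z'.1 * Q z.2 z'.2.
Proof. by []. Qed.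

Lemma ef_gt0 x y : 0 < ef x y.
Proof. exact: expR_gt0. Qed.

Lemma Phi_ge0 z z' : 0 <= Ph z z'.
Proof. by rewrite PhiE !mulr_ge0 // ltW // ef_gt0. Qed.

Lemma pi_ge0 z : 0 <= pi z.
Proof. by case: Hpi => -[]. Qed.

Lemma pi_sum : \sum_z pi z = 1.
Proof. by case: Hpi => -[]. Qed.

Lemma pi_inv z' : \sum_z pi z * Rs z z' = pi z'.
Proof. by case: Hpi => _ ->. Qed.

Lemma pi_invr z' : \sum_z pi z / r z * Ph z z' = pi z' / r z'.
Proof.
have Hr0 : r z' != 0 by rewrite gt_eqF.
apply: (mulIf Hr0); rewrite divfK // -(pi_inv z') big_distrl /=.
apply: eq_bigr => z _; rewrite /Rstar; field.
by rewrite gt_eqF.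
Qed.

Fixpoint h (x y0 : E) (us : seq E) : R :=
  match us with
  | [::] => r (x, y0)
  | y1 :: vs => \sum_x' P x x' * ef x' y1 * h x' y1 vs
  end.

Fixpoint qp (y0 : E) (us : seq E) : R :=
  match us with
  | [::] => 1
  | y1 :: vs => Q y0 y1 * qp y1 vs
  end.

Lemma h_gt0 us x y0 : 0 < h x y0 us.
Proof.
elim: us x y0 => [|y1 vs IH] x y0 /=; first exact: Hr.
have [x1 Hx1] : exists x1, 0 < P x x1.
  case: (pselect (exists x1, 0 < P x x1)) => // H.
  have : \sum_b P x b = 0.
    apply: big1 => b _; apply/eqP; rewrite eq_le HP0 andbT.
    by rewrite leNgt; apply/negP => Hb; apply: H; exists b.
  by rewrite HP1 => /eqP; rewrite oner_eq0.
apply: (@lt_le_trans _ _ (P x x1 * ef x1 y1 * h x1 y1 vs)).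
  by rewrite !mulr_gt0 // ?ef_gt0 ?IH.
apply: (@sum_ge_term _ _ (fun x' => P x x' * ef x' y1 * h x' y1 vs)) => i.
by rewrite !mulr_ge0 // ltW ?ef_gt0 ?IH.
Qed.

Lemma qp_ge0 us y0 : 0 <= qp y0 us.
Proof. by elim: us y0 => [|y1 vs IH] y0 //=; rewrite mulr_ge0. Qed.

Lemma qp_rcons us y0 y' : qp y0 (rcons us y') = qp y0 us * Q (last y0 us) y'.
Proof.
elim: us y0 => [|y1 vs IH] y0 /=; first by rewrite mul1r mulr1.
by rewrite IH mulrA.
Qed.

Lemma h_ext us x y0 :
  \sum_y' Q (last y0 us) y' * h x y0 (rcons us y') = h x y0 us.
Proof.
elim: us x y0 => [|y1 vs IH] x y0 /=.
  rewrite -[RHS](Heig (x, y0)) sum_pair exchange_big /=.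
  apply: eq_bigr => y' _; rewrite big_distrr /=; apply: eq_bigr => x' _.
  by rewrite PhiE /=; ring.
under eq_bigr do rewrite big_distrr /=.
rewrite exchange_big /=; apply: eq_bigr => x' _.
rewrite -IH big_distrr /=; apply: eq_bigr => y' _; ring.
Qed.




Lemma wsum_hq T x y0 (G : E -> R) :
  wsum T (fun us => qp y0 us * h x y0 us * G (last y0 us)) =
  \sum_z' mpow Ph T (x, y0) z' * r z' * G z'.2.
Proof.
elim: T x y0 => [|T IH] x y0.
  rewrite /= mul1r; under eq_bigr do rewrite -mulrA.
  by rewrite sum_delta.
rewrite [LHS]/=.
have -> : \sum_y1 wsum T (fun s => qp y0 (y1 :: s) * h x y0 (y1 :: s) * G (last y0 (y1 :: s)))
  = \sum_y1 \sum_x' (Q y0 y1 * P x x' * ef x' y1) *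
      wsum T (fun us => qp y1 us * h x' y1 us * G (last y1 us)).
  apply: eq_bigr => y1 _.
  under eq_bigr do rewrite -wsumZ.
  rewrite -wsum_sum; apply: wsum_ext => us /=.
  rewrite mulrAC big_distrr /=; apply: eq_bigr => x' _; ring.
rewrite [RHS](eq_bigr (fun z' => \sum_w Ph (x, y0) w * (mpow Ph T w z' * r z' * G z'.2))); last first.
  move=> z' _; rewrite mpowSl !big_distrl /=; apply: eq_bigr => w _; ring.
rewrite [RHS]exchange_big /= [RHS]sum_pair [RHS]exchange_big /=.
apply: eq_bigr => y1 _; apply: eq_bigr => x' _.
rewrite IH big_distrr /=; apply: eq_bigr => z' _; rewrite PhiE /=; ring.
Qed.

Lemma mpow_Rs T z z' : mpow Rs T z z' = r z' / r z * mpow Ph T z z'.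
Proof.
elim: T z' => [|T IH] z' /=.
  case: eqP => [->|_]; last by rewrite mulr0.
  by rewrite mulr1 divff // gt_eqF.
rewrite big_distrr /=; apply: eq_bigr => w _; rewrite IH /Rstar.
field; by rewrite !gt_eqF.
Qed.

Lemma pi_inv_pow T z' : \sum_z pi z * mpow Rs T z z' = pi z'.
Proof.
elim: T z' => [|T IH] z' /=; first by rewrite sum_delta_r.
under eq_bigr do rewrite big_distrr /=.
rewrite exchange_big /= -[RHS]pi_inv; apply: eq_bigr => w _.
by rewrite -IH big_distrl /=; apply: eq_bigr => z _; rewrite mulrA.
Qed.

Lemma Ph_eig_pow T z : \sum_z' mpow Ph T z z' * r z' = r z.
Proof.
elim: T z => [|T IH] z /=; first by rewrite sum_delta.
under eq_bigr do rewrite big_distrl /=.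
rewrite exchange_big /= -[RHS]IH; apply: eq_bigr => w _.
by rewrite -Heig big_distrr /=; apply: eq_bigr => z' _; rewrite mulrA.
Qed.

Definition a x y0 us := pi (x, y0) / r (x, y0) * qp y0 us * h x y0 us.

Definition A n (G : E -> E -> seq E -> R) :=
  \sum_x \sum_y0 wsum n (fun us => a x y0 us * G x y0 us).

Lemma A_B n G1 G2 :
  A n (fun x y0 us => G1 x y0 us - G2 x y0 us) = A n G1 - A n G2.
Proof.
rewrite /A -sumrB; apply: eq_bigr => x _; rewrite -sumrB; apply: eq_bigr => y0 _.
rewrite -wsumN -wsumD; apply: wsum_ext => us; ring.
Qed.

Lemma A_lastG n (G : E -> E -> E -> R) :
  A n (fun x y0 us => G x y0 (last y0 us)) =
  \sum_x \sum_y0 pi (x, y0) / r (x, y0) *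
     \sum_z' mpow Ph n (x, y0) z' * r z' * G x y0 z'.2.
Proof.
apply: eq_bigr => x _; apply: eq_bigr => y0 _.
rewrite -(wsum_hq n x y0 (G x y0)) -wsumZ; apply: wsum_ext => us.
rewrite /a; ring.
Qed.

Lemma A_one n : A n (fun _ _ _ => 1) = 1.
Proof.
rewrite -[RHS]pi_sum [RHS]sum_pair (A_lastG n (fun _ _ _ => 1)).
apply: eq_bigr => x _; apply: eq_bigr => y0 _.
under eq_bigr do rewrite mulr1.
by rewrite Ph_eig_pow divfK // gt_eqF.
Qed.

Lemma A_first n :
  A n (fun x y0 _ => (f x y0)%:~R) = expect pi (fun z => f z.1 z.2).
Proof.
rewrite /expect sum_pair; apply: eq_bigr => x _; apply: eq_bigr => y0 _ /=.
transitivity (pi (x, y0) / r (x, y0) * (f x y0)%:~R *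
   wsum n (fun us => qp y0 us * h x y0 us * (fun _ => 1) (last y0 us))).
  rewrite -wsumZ; apply: wsum_ext => us; rewrite /a; ring.
rewrite (wsum_hq n x y0 (fun _ => 1)); under eq_bigr do rewrite mulr1.
rewrite Ph_eig_pow; field; by rewrite gt_eqF.
Qed.

Lemma A_last n :
  A n (fun x y0 us => (f x (last y0 us))%:~R) = lagged_expect Rs pi f n.
Proof.
rewrite (A_lastG n (fun x _ y => (f x y)%:~R)) /lagged_expect.
rewrite [RHS]exchange_big /= [RHS]sum_pair; apply: eq_bigr => x _; apply: eq_bigr => y0 _.
rewrite [RHS]exchange_big /= big_distrr /=; apply: eq_bigr => z' _.
rewrite -big_distrl -big_distrl /= pi_inv mpow_Rs /=; field; by rewrite !gt_eqF.
Qed.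

Definition cc x y0 y1 vs x' y' :=
  pi (x, y0) / r (x, y0) * qp y0 (y1 :: vs) * P x x' * Q (last y1 vs) y'.
Definition jj (x' y1 : E) vs (y' : E) := ef x' y1 * h x' y1 (rcons vs y').
Definition nu x y0 y1 vs x' y' :=
  h x y0 (y1 :: vs) * ef x' y' * r (x', y') / r (x, last y1 vs).

Definition BS m (F : E -> E -> E -> seq E -> E -> E -> R) :=
  \sum_x \sum_y0 \sum_y1 wsum m (fun vs => \sum_x' \sum_y' F x y0 y1 vs x' y').

Lemma BS_D m F G : BS m (fun x y0 y1 vs x' y' => F x y0 y1 vs x' y' + G x y0 y1 vs x' y')
  = BS m F + BS m G.
Proof.
rewrite /BS -big_split; apply: eq_bigr => x _; rewrite -big_split /=; apply: eq_bigr => y0 _.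
rewrite -big_split /=; apply: eq_bigr => y1 _; rewrite -wsumD; apply: wsum_ext => vs.
rewrite -big_split /=; apply: eq_bigr => x' _; by rewrite -big_split.
Qed.

Lemma BS_Z m k F : BS m (fun x y0 y1 vs x' y' => k * F x y0 y1 vs x' y') = k * BS m F.
Proof.
rewrite /BS big_distrr /=; apply: eq_bigr => x _; rewrite big_distrr /=; apply: eq_bigr => y0 _.
rewrite big_distrr /=; apply: eq_bigr => y1 _; rewrite -wsumZ; apply: wsum_ext => vs.
rewrite big_distrr /=; apply: eq_bigr => x' _; by rewrite big_distrr.
Qed.

Lemma BS_le m F G : (forall x y0 y1 vs x' y', F x y0 y1 vs x' y' <= G x y0 y1 vs x' y') ->
  BS m F <= BS m G.
Proof.
move=> H; apply: ler_sum => x _; apply: ler_sum => y0 _; apply: ler_sum => y1 _.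
apply: wsum_le => vs; apply: ler_sum => x' _; apply: ler_sum => y' _; exact: H.
Qed.

Lemma BS_lt m F G x y0 y1 vs x' y' :
  (forall x y0 y1 vs x' y', F x y0 y1 vs x' y' <= G x y0 y1 vs x' y') ->
  size vs = m -> F x y0 y1 vs x' y' < G x y0 y1 vs x' y' ->
  BS m F < BS m G.
Proof.
move=> H Hs Hlt.
have Hle : forall vs, \sum_x' \sum_y' F x y0 y1 vs x' y' <= \sum_x' \sum_y' G x y0 y1 vs x' y'.
  by move=> ?; apply: ler_sum => ? _; apply: ler_sum => ? _; apply: H.
apply: (@sum_lt_point _ _ _ _ x) => [x2|]; first by apply: ler_sum => ? _; apply: ler_sum => ? _;
  apply: wsum_le => ?; apply: ler_sum => ? _; apply: ler_sum => ? _; apply: H.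
apply: (@sum_lt_point _ _ _ _ y0) => [y2|]; first by apply: ler_sum => ? _;
  apply: wsum_le => ?; apply: ler_sum => ? _; apply: ler_sum => ? _; apply: H.
apply: (@sum_lt_point _ _ _ _ y1) => [y2|]; first by apply: wsum_le => ?; apply: ler_sum => ? _; apply: ler_sum => ? _; apply: H.
apply: (wsum_lt Hle Hs).
apply: (@sum_lt_point _ _ _ _ x') => [x2|]; first by apply: ler_sum => ? _; apply: H.
apply: (@sum_lt_point _ _ _ _ y') => // y2; exact: H.
Qed.

Lemma BS_s m G : BS m (fun x y0 y1 vs x' y' =>
   cc x y0 y1 vs x' y' * jj x' y1 vs y' * G x y0 (y1 :: vs)) = A m.+1 G.
Proof.
apply: eq_bigr => x _; apply: eq_bigr => y0 _; apply: eq_bigr => y1 _.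
apply: wsum_ext => vs /=.
transitivity (pi (x, y0) / r (x, y0) * qp y0 (y1 :: vs) * G x y0 (y1 :: vs) *
  \sum_x' P x x' * ef x' y1 * \sum_y' Q (last y1 vs) y' * h x' y1 (rcons vs y')).
  rewrite big_distrr /=; apply: eq_bigr => x' _; rewrite !big_distrr /=.
  apply: eq_bigr => y' _; rewrite /cc /jj /=; ring.
rewrite [X in _ * X = _](eq_bigr (fun x' => P x x' * ef x' y1 * h x' y1 vs)).
  by rewrite /a /=; ring.
by move=> x' _; rewrite h_ext.
Qed.

Lemma BS_s' m G : BS m (fun x y0 y1 vs x' y' =>
   cc x y0 y1 vs x' y' * jj x' y1 vs y' * G x' y1 (rcons vs y')) = A m.+1 G.
Proof.
rewrite /BS /A.
transitivity (\sum_y1 \sum_x \sum_y0 wsum m (fun vs => \sum_x' \sum_y' cc x y0 y1 vs x' y' *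
   jj x' y1 vs y' * G x' y1 (rcons vs y'))).
  under eq_bigr do rewrite exchange_big /=; by rewrite exchange_big.
transitivity (\sum_y1 \sum_x' wsum m (fun vs => \sum_y' \sum_x \sum_y0 cc x y0 y1 vs x' y' *
   jj x' y1 vs y' * G x' y1 (rcons vs y'))).
  apply: eq_bigr => y1 _; rewrite -wsum_sum.
  under eq_bigr do rewrite -wsum_sum.
  rewrite -wsum_sum; apply: wsum_ext => vs.
  by rewrite sum4_swap.
rewrite exchange_big /=; apply: eq_bigr => x' _; apply: eq_bigr => y1 _.
transitivity (wsum m.+1 (fun us => a x' y1 us * G x' y1 us)); last by [].
rewrite -wsum_rcons; apply: wsum_ext => vs; apply: eq_bigr => y' _.
transitivity ((\sum_x \sum_y0 pi (x, y0) / r (x, y0) * Ph (x, y0) (x', y1)) *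
   (qp y1 (rcons vs y') * h x' y1 (rcons vs y') * G x' y1 (rcons vs y'))).
  rewrite big_distrl; apply: eq_bigr => x _; rewrite big_distrl; apply: eq_bigr => y0 _.
  rewrite /cc /jj PhiE qp_rcons /=; ring.
by rewrite -(sum_pair (fun z => pi z / r z * Ph z (x', y1))) pi_invr /a; ring.
Qed.

Lemma BS_nu m : BS m (fun x y0 y1 vs x' y' => cc x y0 y1 vs x' y' * nu x y0 y1 vs x' y')
   = A m.+1 (fun _ _ _ => 1).
Proof.
apply: eq_bigr => x _; apply: eq_bigr => y0 _; apply: eq_bigr => y1 _.
apply: wsum_ext => vs /=; rewrite /a mulr1.
transitivity (pi (x, y0) / r (x, y0) * qp y0 (y1 :: vs) * h x y0 (y1 :: vs) / r (x, last y1 vs) *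
   \sum_(z : E * E) Ph (x, last y1 vs) z * r z).
  rewrite sum_pair big_distrr /=; apply: eq_bigr => x' _; rewrite big_distrr /=.
  apply: eq_bigr => y' _; rewrite /cc /nu PhiE /=; ring.
rewrite Heig; field; by rewrite !gt_eqF.
Qed.

Definition gg x y0 us : R := (f x (last y0 us))%:~R - (f x y0)%:~R.
Definition ll x y0 us : R := ln (r (x, last y0 us)) - ln (h x y0 us).

Lemma jj_gt0 x' y1 vs y' : 0 < jj x' y1 vs y'.
Proof. by rewrite mulr_gt0 ?ef_gt0 ?h_gt0. Qed.

Lemma nu_gt0 x y0 y1 vs x' y' : 0 < nu x y0 y1 vs x' y'.
Proof. by rewrite /nu divr_gt0 // !mulr_gt0 ?ef_gt0 ?h_gt0. Qed.

Lemma cc_ge0 x y0 y1 vs x' y' : 0 <= cc x y0 y1 vs x' y'.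
Proof. rewrite /cc; apply: mulr_ge0 => //; apply: mulr_ge0 => //; apply: mulr_ge0; first by rewrite divr_ge0 ?pi_ge0 // ltW. exact: qp_ge0. Qed.

Lemma ln_ratio x y0 y1 vs x' y' :
  ln (nu x y0 y1 vs x' y') - ln (jj x' y1 vs y') =
  th * gg x' y1 (rcons vs y') + ll x' y1 (rcons vs y') - ll x y0 (y1 :: vs).
Proof.
have hp := h_gt0 (y1 :: vs) x y0.
move: hp; set H0 := h x y0 (y1 :: vs) => hp.
rewrite /nu /jj /gg /ll /= last_rcons.
rewrite lnDp; last exact: Hr.
  rewrite !lnMp ?(mulr_gt0, ef_gt0, h_gt0) //.
  rewrite /ef !expRK; ring.
by rewrite !mulr_gt0 ?ef_gt0.
Qed.

Lemma BS_L m :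
  BS m (fun x y0 y1 vs x' y' => cc x y0 y1 vs x' y' * jj x' y1 vs y' *
     (ln (nu x y0 y1 vs x' y') - ln (jj x' y1 vs y'))) =
  th * (lagged_expect Rs pi f m.+1 - expect pi (fun z => f z.1 z.2)).
Proof.
transitivity (BS m (fun x y0 y1 vs x' y' =>
   th * (cc x y0 y1 vs x' y' * jj x' y1 vs y' * gg x' y1 (rcons vs y')) +
   (cc x y0 y1 vs x' y' * jj x' y1 vs y' * ll x' y1 (rcons vs y') +
    (-1) * (cc x y0 y1 vs x' y' * jj x' y1 vs y' * ll x y0 (y1 :: vs))))).
  congr (BS m _); apply: funext => x; apply: funext => y0; apply: funext => y1.
  apply: funext => vs; apply: funext => x'; apply: funext => y'.
  rewrite ln_ratio; ring.
rewrite !BS_D !BS_Z BS_s' (BS_s' m ll) (BS_s m ll).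
rewrite (@A_B m.+1 (fun x y0 us => (f x (last y0 us))%:~R) (fun x y0 _ => (f x y0)%:~R)).
rewrite A_last A_first; ring.
Qed.

Lemma BS_U m :
  BS m (fun x y0 y1 vs x' y' => cc x y0 y1 vs x' y' * (nu x y0 y1 vs x' y' - jj x' y1 vs y')) = 0.
Proof.
transitivity (BS m (fun x y0 y1 vs x' y' => cc x y0 y1 vs x' y' * nu x y0 y1 vs x' y' +
   (-1) * (cc x y0 y1 vs x' y' * jj x' y1 vs y' * (fun _ _ _ => 1) x y0 (y1 :: vs)))).
  congr (BS m _); apply: funext => x; apply: funext => y0; apply: funext => y1.
  apply: funext => vs; apply: funext => x'; apply: funext => y'; rewrite /=; ring.
by rewrite BS_D BS_Z BS_nu (BS_s m (fun _ _ _ => 1)) A_one; ring.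
Qed.

Lemma main_le m : th * (lagged_expect Rs pi f m.+1 - expect pi (fun z => f z.1 z.2)) <= 0.
Proof.
rewrite -BS_L -(BS_U m); apply: BS_le => *.
by apply: key_ineq; rewrite ?cc_ge0 ?jj_gt0 ?nu_gt0.
Qed.

Lemma main_lt m x y0 y1 vs x' y' : size vs = m ->
  0 < cc x y0 y1 vs x' y' -> nu x y0 y1 vs x' y' != jj x' y1 vs y' ->
  th * (lagged_expect Rs pi f m.+1 - expect pi (fun z => f z.1 z.2)) < 0.
Proof.
move=> Hs Hc Hn; rewrite -BS_L -(BS_U m).
apply: (BS_lt (x := x) (y0 := y0) (y1 := y1) (vs := vs) (x' := x') (y' := y')) => //.
  by move=> *; apply: key_ineq; rewrite ?cc_ge0 ?jj_gt0 ?nu_gt0.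
by apply: key_strict; rewrite ?jj_gt0 ?nu_gt0.
Qed.

Lemma joint_pos N x x' y y' : 0 < mpow P N x x' -> 0 < mpow Q N y y' ->
  0 < mpow Ph N (x, y) (x', y').
Proof.
elim: N x' y' => [|N IH] x' y'.
  rewrite !mpow0; case: eqP => [->|_]; last by rewrite ltxx.
  by case: eqP => [->|_]; rewrite ?ltxx // eqxx.
rewrite !mpowS => hP hQ.
have [w Hw] : exists w, 0 < mpow P N x w * P w x'.
  by apply: sum_pos_term => // w; rewrite mulr_ge0 // mpow_ge0.
have [v Hv] : exists v, 0 < mpow Q N y v * Q v y'.
  by apply: sum_pos_term => // v; rewrite mulr_ge0 // mpow_ge0.
have [Hw1 Hw2] := mul_pos_factors (mpow_ge0 _ _ _ HP0) (HP0 _ _) Hw.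
have [Hv1 Hv2] := mul_pos_factors (mpow_ge0 _ _ _ HQ0) (HQ0 _ _) Hv.
apply: (@lt_le_trans _ _ (mpow Ph N (x, y) (w, v) * Ph (w, v) (x', y'))).
  by rewrite mulr_gt0 ?IH // PhiE /= !mulr_gt0 ?ef_gt0.
apply: (@sum_ge_term_A _ _ (fun z => mpow Ph N (x, y) z * Ph z (x', y'))) => z.
by rewrite mulr_ge0 ?Phi_ge0 // mpow_ge0 // => ? ?; apply: Phi_ge0.
Qed.

Lemma pi_reach z z' N : 0 < pi z -> 0 < mpow P N z.1 z'.1 -> 0 < mpow Q N z.2 z'.2 ->
  0 < pi z'.
Proof.
case: z => x y; case: z' => x' y' /= hpi hP hQ.
have HR := joint_pos hP hQ.
rewrite -(pi_inv_pow N).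
apply: (@lt_le_trans _ _ (pi (x, y) * mpow Rs N (x, y) (x', y'))).
  by rewrite mulr_gt0 // mpow_Rs mulr_gt0 // divr_gt0.
apply: (@sum_ge_term_A _ _ (fun z => pi z * mpow Rs N z (x', y'))) => z.
rewrite mulr_ge0 ?pi_ge0 // mpow_Rs mulr_ge0 //; first by rewrite divr_ge0 // ltW.
by apply: mpow_ge0 => ? ?; apply: Phi_ge0.
Qed.

Section Cycle.
Variables (m n : nat) (xs ys : nat -> E).
Hypothesis Hn : (0 < n)%N.
Hypothesis HcP : is_cycle P n xs.
Hypothesis HcQ : is_cycle Q n ys.

Let X k := xs (k %% n)%N.
Let Y k := ys (k %% n)%N.
Let win k := [seq Y (k + i) | i <- iota 1 m.+1].
Let vsk k := [seq Y (k + i) | i <- iota 2 m].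

Lemma map_iota2 (G : nat -> E) l :
  [seq G i | i <- iota 2 l] = [seq G i.+1 | i <- iota 1 l].
Proof. by rewrite (iotaDl 1 1) -map_comp. Qed.

Lemma iota_rcons l : iota 1 l.+1 = rcons (iota 1 l) l.+1.
Proof. by rewrite -cats1 -[in LHS](addn1 l) iotaD add1n. Qed.

Lemma winE k : win k = Y k.+1 :: vsk k.
Proof. by rewrite /win /vsk /= addn1. Qed.

Lemma vsk_rcons k : rcons (vsk k) (Y (k.+1 + m.+1)) = win k.+1.
Proof.
rewrite /win /vsk map_iota2 iota_rcons map_rcons; congr rcons.
by apply: eq_map => i; rewrite addSnnS.
Qed.

Lemma win_last k : last (Y k) (win k) = Y (k + m.+1).
Proof. by rewrite /win iota_rcons map_rcons last_rcons. Qed.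

Lemma vsk_size k : size (vsk k) = m.
Proof. by rewrite /vsk size_map size_iota. Qed.

Lemma modS j : ((j %% n).+1 %% n = j.+1 %% n)%N.
Proof. by rewrite -[(j %% n).+1]addn1 modnDml addn1. Qed.

Lemma QY j : 0 < Q (Y j) (Y j.+1).
Proof. by rewrite /Y -modS; apply: HcQ; rewrite ltn_pmod. Qed.

Lemma PX j : 0 < P (X j) (X j.+1).
Proof. by rewrite /X -modS; apply: HcP; rewrite ltn_pmod. Qed.

Lemma Xn k : X (k + n) = X k.
Proof. by rewrite /X modnDr. Qed.

Lemma Yn k : Y (k + n) = Y k.
Proof. by rewrite /Y modnDr. Qed.

Lemma winn k : win (k + n) = win k.
Proof.
by apply: eq_map => i; rewrite addnAC Yn.
Qed.

Lemma qp_win l k : 0 < qp (Y k) [seq Y (k + i) | i <- iota 1 l].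
Proof.
elim: l k => [|l IH] k //=.
rewrite map_iota2 addn1 mulr_gt0 ?QY //.
by have := IH k.+1; congr (0 < qp _ _); apply: eq_map => i; rewrite addSnnS.
Qed.

Lemma cycle_strict (Hth : 0 < th) (Hpos : forall k, 0 < pi (X k, Y k))
  (Hne : \sum_(k < n) f (xs k) (ys k) != \sum_(k < n) f (xs k) (ys ((k + m.+1) %% n)%N)) :
  th * (lagged_expect Rs pi f m.+1 - expect pi (fun z => f z.1 z.2)) < 0.
Proof.
case: (pselect (exists k, nu (X k) (Y k) (Y k.+1) (vsk k) (X k.+1) (Y (k.+1 + m.+1))
   != jj (X k.+1) (Y k.+1) (vsk k) (Y (k.+1 + m.+1)))) => [[k Hk]|Hall].
  apply: (main_lt (vsk_size k) _ Hk).
  rewrite /cc; apply: mulr_gt0; last first.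
    have -> : last (Y k.+1) (vsk k) = Y (k + m.+1).
      by rewrite -(win_last k) winE.
    by rewrite addSn QY.
  apply: mulr_gt0; last exact: PX.
  apply: mulr_gt0; first by rewrite divr_gt0.
  by rewrite -winE; apply: qp_win.
have Heq : forall k, nu (X k) (Y k) (Y k.+1) (vsk k) (X k.+1) (Y (k.+1 + m.+1))
   = jj (X k.+1) (Y k.+1) (vsk k) (Y (k.+1 + m.+1)).
  move=> k; apply/eqP; apply: contraT => H; exfalso; apply: Hall; by exists k.
pose Ph' k := th * gg (X k) (Y k) (win k) + ll (X k) (Y k) (win k).
have Hpsi : forall k, (Ph' k.+1 - Ph' k) + th * gg (X k) (Y k) (win k) = 0.
  move=> k; have := ln_ratio (X k) (Y k) (Y k.+1) (vsk k) (X k.+1) (Y (k.+1 + m.+1)).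
  rewrite Heq subrr vsk_rcons -winE /Ph' => H; rewrite H; ring.
have Hsum : \sum_(0 <= k < n) ((Ph' k.+1 - Ph' k) + th * gg (X k) (Y k) (win k)) = 0.
  by rewrite big1 // => k _; apply: Hpsi.
rewrite big_split /= telescope_sumr // -{1}(add0n n) /Ph' Xn Yn winn subrr add0r in Hsum.
rewrite -big_distrr /= in Hsum.
have Hs0 : \sum_(0 <= k < n) gg (X k) (Y k) (win k) = 0.
  by move/eqP: Hsum; rewrite mulf_eq0 gt_eqF //= => /eqP.
exfalso; move/eqP: Hne; apply.
apply/eqP; rewrite -(eqr_int R) !mulrz_sumr; apply/eqP.
apply/eqP; rewrite eq_sym -subr_eq0 -sumrB; apply/eqP.
rewrite -[RHS]Hs0 big_mkord; apply: eq_bigr => k _.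
by rewrite /gg win_last /X /Y (modn_small (ltn_ord k)).
Qed.

End Cycle.

End Main.

Unset Implicit Arguments.

Theorem lemma5p10 (R : realType) (E : finType) (P Q : E -> E -> R)
  (piP piQ : E -> R) (f : E -> E -> int)
  (thetastar : R) (rstar : (E * E)%type -> R) (pistar : (E * E)%type -> R) :
  stochastic P -> irreducible P -> aperiodic P ->
  stochastic Q -> irreducible Q -> aperiodic Q ->
  invariant_prob P piP -> invariant_prob Q piQ ->
  gcd_values_one f ->
  (* mu = pi(f) < 0, with pi = piP (x) piQ *)
  expect (fun z : E * E => piP z.1 * piQ z.2) (fun z => f z.1 z.2) < 0 ->
  condC1 P Q f -> condC2 P Q f ->
  (* theta^* : the positive solution of phi(theta) = 1 *)
  0 < thetastar -> spectral_radius (Phi P Q f thetastar) = 1 ->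
  (* r^* : positive right eigenvector of Phi(thetastar) for eigenvalue 1 *)
  (forall z, 0 < rstar z) ->
  (forall z, \sum_(z' : E * E) Phi P Q f thetastar z z' * rstar z' = rstar z) ->
  (* pi^* : invariant probability vector of R^* *)
  invariant_prob (Rstar (Phi P Q f thetastar) rstar) pistar ->
  forall T : nat, (1 <= T)%N ->
    lagged_expect (Rstar (Phi P Q f thetastar) rstar) pistar f T
    < expect pistar (fun z => f z.1 z.2).
Proof.
move=> [HP0 HP1] HirP HapP [HQ0 HQ1] HirQ _ _ _ _ _ _ HC2 Hth _ Hr Heig Hpi T HT.
case: T HT => [//|m] _.
have [n [xs [ys [Hn HcP HcQ Hne]]]] := HC2 m.+1 erefl.
have Hn0 : (0 < n)%N by [].
have [[a b] Hab] : exists z, 0 < pistar z.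
  apply: sum_pos_term; first by move=> z; apply: (pi_ge0 Hpi).
  by rewrite (pi_sum Hpi) ltr01.
have [n1 Hn1] := HirP a (xs 0%N).
have [n2 Hn2] := HirQ b (ys 0%N).
pose A t := 0 < mpow P t (xs 0%N) (xs 0%N).
have A0 : A 0%N by rewrite /A mpow0 eqxx ltr01.
have AD : forall s t, A s -> A t -> A (s + t)%N.
  by move=> s t hs ht; exact: (mpow_mul_pos HP0 hs ht).
have Aper : forall d, (forall t, (0 < t)%N -> A t -> (d %| t)%N) -> d = 1%N.
  by move=> d Hd; apply: (HapP (xs 0%N)) => t Ht Hp; apply: Hd.
have Acyc : A n.
  have := @mpow_path _ _ P (fun j => xs (j %% n)%N) n HP0.
  rewrite mod0n modnn; apply => i.
  rewrite -[(i.+1 %% n)%N](modS n) ; apply: HcP; by rewrite ltn_pmod.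
have Qcyc : 0 < mpow Q n (ys 0%N) (ys 0%N).
  have := @mpow_path _ _ Q (fun j => ys (j %% n)%N) n HQ0.
  rewrite mod0n modnn; apply => i.
  rewrite -[(i.+1 %% n)%N](modS n) ; apply: HcQ; by rewrite ltn_pmod.
have Qk : forall k, 0 < mpow Q (k * n)%N (ys 0%N) (ys 0%N).
  elim=> [|k IH]; first by rewrite mul0n mpow0 eqxx ltr01.
  by rewrite mulSn; exact: (mpow_mul_pos HQ0 Qcyc IH).
have [t [At Htm]] := residues Hn0 A0 AD Aper (n2 + (n - 1) * n1)%N.
pose t' := (t + n2 * n)%N.
have At' : A t' by exact: (AD _ _ At (AM A0 AD n2 Acyc)).
pose N := (n1 + t')%N.
have HPN : 0 < mpow P N a (xs 0%N) by exact: (mpow_mul_pos HP0 Hn1 At').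
have HNmod : (N %% n = n2 %% n)%N.
  rewrite /N /t' addnA (addnC _ (n2 * n)) modnMDl -modnDmr Htm modnDmr.
  have -> : (n1 + (n2 + (n - 1) * n1) = n1 * n + n2)%N.
    rewrite addnCA addnC; congr (_ + _)%N.
    by rewrite -{1}(mul1n n1) -mulnDl subnKC // mulnC.
  by rewrite modnMDl.
have HNge : (n2 <= N)%N.
  rewrite /N /t'; apply: (leq_trans _ (leq_addl _ _)); apply: (leq_trans _ (leq_addl _ _)).
  by rewrite leq_pmulr.
have HNk : N = (n2 + (N - n2) %/ n * n)%N.
  rewrite divnK ?subnKC //.
  by rewrite -eqn_mod_dvd // HNmod.
have HQN : 0 < mpow Q N b (ys 0%N) by rewrite HNk; exact: (mpow_mul_pos HQ0 Hn2 (Qk _)).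
have Hpi0 : 0 < pistar (xs 0%N, ys 0%N).
  apply: (pi_reach HP0 HQ0 Hr Hpi Hab (N := N)) => /=; [exact: HPN | exact: HQN].
have Hpos : forall k, 0 < pistar (xs (k %% n)%N, ys (k %% n)%N).
  elim=> [|k IH]; first by rewrite mod0n.
  apply: (pi_reach HP0 HQ0 Hr Hpi IH (N := 1%N)) => /=.
    rewrite sum_delta; exact: (PX Hn0 HcP k).
  rewrite sum_delta; exact: (QY Hn0 HcQ k).
have := cycle_strict HP0 HP1 HQ0 Hr Heig Hpi Hn0 HcP HcQ Hth Hpos Hne.
by rewrite pmulr_rlt0 // subr_lt0.
Qed.
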